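(* Let $G$ be a nonempty $L^0$-convex subset of $L^0$ (with the topology of convergence in probability). If $G$ is $L^0$-convexly compact, then $G$ is almost surely bounded (there is $\xi\in L^0_+$ with $|g|\le\xi$ for all $g\in G$) and closed.
   Context: $(\Omega,\mathcal{F},P)$ is a probability space; $L^0$ denotes the set of equivalence classes (modulo $P$-a.s. equality) of real-valued $\mathcal{F}$-measurable random variables, endowed with the topology of convergence in probability and the a.s. partial order; $L^0_+=\{\xi\in L^0:\xi\ge0\}$. A subset $G\subset L^0$ is $L^0$-convex if $\xi x+(1-\xi)y\in G$ for all $x,y\in G$ and all $\xi\in L^0$ with $0\le\xi\le1$. An $L^0$-convex set $G$ is $L^0$-convexly compact if every family of $L^0$-convex subsets of $G$ which are closed (in the relative topology of $G$) and which has the finite intersection property has nonempty intersection. *)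

(* Defs.v *)
From HB Require Import structures.
From mathcomp Require Import all_boot all_order all_algebra.
From mathcomp Require Import all_classical all_reals all_analysis.
Set Implicit Arguments. Unset Strict Implicit. Unset Printing Implicit Defensive.
Import Order.TTheory GRing.Theory Num.Theory.
Local Open Scope classical_set_scope.
Local Open Scope ring_scope.

(* L^0 over a probability space (T, F, P), represented by measurable
   representatives; subsets of L^0 (sets of equivalence classes) are
   represented by "saturated" sets of measurable functions, i.e. sets closed
   under P-a.s. equality. *)
Section L0.
Context {d : measure_display} {T : measurableType d} {R : realType}
  (P : probability T R).

Definition L0 (f : T -> R) : Prop := measurable_fun setT f.

Definition L0set (A : set (T -> R)) : Prop :=
  A `<=` L0 /\
  forall f g, A f -> L0 g -> {ae P, forall x, f x = g x} -> A g.

Definition L0convex (A : set (T -> R)) : Prop :=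
  forall f g xi, A f -> A g -> L0 xi ->
    {ae P, forall x, 0 <= xi x <= 1} ->
    A (fun x => xi x * f x + (1 - xi x) * g x).

Definition prob_open (U : set (T -> R)) : Prop :=
  U `<=` L0 /\
  forall f, U f -> exists2 eps : R, 0 < eps &
    forall g, L0 g -> (P [set x | (eps < `|g x - f x|)%R] < eps%:E)%E -> U g.

Definition prob_closed (C : set (T -> R)) : Prop :=
  C `<=` L0 /\ prob_open (L0 `\` C).

Definition rel_closed (G F : set (T -> R)) : Prop :=
  exists2 C, prob_closed C & F = G `&` C.

Definition fin_inter_prop (Fam : set (set (T -> R))) : Prop :=
  forall (n : nat) (h : 'I_n -> set (T -> R)),
    (forall i, Fam (h i)) -> exists f, forall i, h i f.

Definition L0convexly_compact (G : set (T -> R)) : Prop :=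
  forall Fam : set (set (T -> R)),
    (forall F, Fam F -> [/\ L0set F, F `<=` G, L0convex F & rel_closed G F]) ->
    fin_inter_prop Fam ->
    exists f, forall F, Fam F -> F f.

End L0.

(* Main.v *)
Require Import Defs.
From HB Require Import structures.
From mathcomp Require Import all_boot all_order all_algebra.
From mathcomp Require Import all_classical all_reals all_analysis.
From mathcomp Require Import measurable_realfun ring lra.
Import Order.TTheory GRing.Theory Num.Theory.
Local Open Scope classical_set_scope.
Local Open Scope ring_scope.

Section Helpers.
Context d (T : measurableType d) (R : realType) (P : probability T R).

Lemma mset_lt (f g : T -> R) : L0 f -> L0 g -> measurable [set x | f x < g x].
Proof.
move=> mf mg.
have mt : measurable [set true] by [].
have := measurable_fun_ltr mf mg measurableT mt.
rewrite setTI; congr measurable; apply/seteqP; split=> x /=; by [].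
Qed.

Lemma aeP (Q : T -> Prop) :
  {ae P, forall x, Q x} <-> P.-negligible (~` [set x | Q x]).
Proof. by []. Qed.

Lemma ae_sub (E D : set T) (Q : T -> Prop) : measurable E -> measurable D ->
  {ae P, forall x, Q x} -> (forall x, E x -> Q x -> D x) -> (P E <= P D)%E.
Proof.
move=> mE mD /aeP [N [mN N0 sN]] H.
apply: (@le_trans _ _ (P (D `|` N))).
  apply: le_measure; rewrite ?inE //; first exact: measurableU.
  move=> x Ex; case: (pselect (Q x)) => q; first by left; exact: H.
  by right; apply: sN.
apply: le_trans (measureU2 P mD mN) _.
rewrite (_ : _ N = 0%E) ?adde0 //; exact: N0.
Qed.

Lemma finP (E : set T) : measurable E -> exists r : R, P E = r%:E.
Proof. by move=> mE; apply/EFin_fin_numP; exact: fin_num_measure. Qed.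

Lemma ae_levels (u : T -> R) : L0 u ->
  (forall k : nat, P [set x | k.+1%:R^-1 < u x] = 0%E) ->
  {ae P, forall x, u x <= 0}.
Proof.
move=> mu H; apply/aeP.
apply: (@negligibleS _ _ _ _ (\bigcup_k [set x | k.+1%:R^-1 < u x])).
  move=> x /= /negP; rewrite -ltNge => ux.
  exists (Num.truncn (u x)^-1) => //=.
  rewrite invf_plt ?posrE //.
  exact: truncnS_gt.
apply: negligible_bigcup => k; apply/negligibleP; last exact: H.
apply: mset_lt => //; exact: measurable_cst.
Qed.

Lemma le_eps_0 (E : set T) (c : R) : measurable E -> 0 < c ->
  (forall eps : R, 0 < eps -> eps <= c -> (P E <= eps%:E)%E) -> P E = 0%E.
Proof.
move=> mE c0 H; have [r Hr] := finP E mE.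
have r0 : 0 <= r by rewrite -lee_fin -Hr; exact: measure_ge0.
rewrite Hr; congr (_%:E); apply/eqP; rewrite eq_le r0 andbT.
rewrite leNgt; apply/negP => rp.
have e0 : 0 < Num.min c (r / 2) by rewrite lt_min c0 /=; lra.
have m1 : Num.min c (r / 2) <= c by rewrite ge_min lexx.
have m2 : Num.min c (r / 2) <= r / 2 by rewrite ge_min lexx orbT.
have := H _ e0 m1; rewrite Hr lee_fin => h; lra.
Qed.

End Helpers.

Section Key.
Context d (T : measurableType d) (R : realType) (P : probability T R).
Variable s : (T -> R) -> T -> R.
Hypothesis hs_meas : forall h, L0 h -> L0 (s h).
Hypothesis hs_conv : forall h1 h2 (xi : T -> R) x, 0 <= xi x <= 1 ->
  s (fun y => xi y * h1 y + (1 - xi y) * h2 y) x <= Num.max (s h1 x) (s h2 x).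
Hypothesis hs_lip : forall h1 h2 x, `|s h1 x - s h2 x| <= `|h1 x - h2 x|.

Lemma s_loc h1 h2 x : h1 x = h2 x -> s h1 x = s h2 x.
Proof.
move=> e; have := hs_lip h1 h2 x; rewrite e subrr normr0 normr_le0 subr_eq0.
by move/eqP.
Qed.

Variable G : set (T -> R).
Hypothesis GL0 : L0set P G.
Hypothesis Gcvx : L0convex P G.

Lemma glue m g : G m -> G g -> exists m', G m' /\
  (forall x, s m' x <= s m x) /\ (forall x, s m' x <= s g x).
Proof.
move=> Gm Gg.
have Lm : L0 m by apply: GL0.1.
have Lg : L0 g by apply: GL0.1.
pose A := [set x | s m x <= s g x].
have mA : measurable A.
  have -> : A = ~` [set x | s g x < s m x].
    by apply/seteqP; split=> x /=; [move=> h; apply/negP; rewrite -leNgt | move/negP; rewrite -leNgt].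
  by apply: measurableC; apply: mset_lt; apply: hs_meas.
pose xi := \1_A : T -> R.
exists (fun y => xi y * m y + (1 - xi y) * g y); split.
  apply: Gcvx => //; first exact: measurable_indic.
  apply: aeW => x; rewrite /xi indicE; by case: (x \in A) => /=; rewrite ?lexx ?ler01.
have key : forall x, s (fun y => xi y * m y + (1 - xi y) * g y) x =
                     if x \in A then s m x else s g x.
  move=> x; rewrite /xi; case: (boolP (x \in A)) => xA /=.
    by apply: s_loc; rewrite indicE xA /= mul1r subrr mul0r addr0.
  by apply: s_loc; rewrite indicE (negbTE xA) /= mul0r subr0 mul1r add0r.
split=> x; rewrite key; case: (boolP (x \in A)) => xA //.
- move: xA; rewrite notin_setE /A /= => /negP; rewrite -ltNge => /ltW //.
- move: xA; rewrite inE /A /= => ->; done.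
Qed.

Lemma fip_nat (gs : nat -> T -> R) n : (exists g, G g) ->
  (forall i, (i < n)%N -> G (gs i)) ->
  exists m, G m /\ forall i, (i < n)%N -> forall x, s m x <= s (gs i) x.
Proof.
move=> [g0 Gg0]; elim: n => [|n IH] H.
  by exists g0; split.
have [m [Gm Hm]] : exists m, G m /\ forall i, (i < n)%N -> forall x, s m x <= s (gs i) x.
  by apply: IH => i ilt; apply: H; rewrite ltnS ltnW.
have [m' [Gm' [H1 H2]]] := glue _ _ Gm (H n (ltnSn n)).
exists m'; split => // i; rewrite ltnS leq_eqVlt => /orP [/eqP -> //| ilt] x.
exact: le_trans (H1 x) (Hm i ilt x).
Qed.

Definition Cg g := [set h | L0 h /\ {ae P, forall x, s h x <= s g x}].

Lemma Cg_closed g : L0 g -> prob_closed P (Cg g).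
Proof.
move=> Lg; split; first by move=> h [].
split; first by move=> h [].
move=> h [Lh nC].
have nae : ~ {ae P, forall x, s h x - s g x <= 0}.
  move=> H; apply: nC; split => //; by apply: filterS H => x; rewrite subr_le0.
have mhg : L0 (fun x => s h x - s g x).
  by apply: measurable_funB; apply: hs_meas.
have [k Pk] : exists k : nat, P [set x | k.+1%:R^-1 < s h x - s g x] <> 0%E.
  apply/existsNP => H; apply: nae; apply: ae_levels => //.
set B := [set x | _ < _] in Pk.
have mB : measurable B by apply: mset_lt => //; exact: measurable_cst.
have [r Hr] := @finP _ _ _ P B mB.
have r0 : 0 < r.
  rewrite lt_def; apply/andP; split.
    by apply/eqP => r0; apply: Pk; rewrite Hr r0.
  by rewrite -lee_fin -Hr; exact: measure_ge0.
pose eps := Num.min (k.+1%:R^-1 / 2) (r / 2).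
have k0 : 0 < k.+1%:R^-1 :> R by rewrite invr_gt0 ltr0n.
have e0 : 0 < eps by rewrite lt_min; apply/andP; split; apply: divr_gt0.
have e1 : eps <= k.+1%:R^-1 / 2 by rewrite ge_min lexx.
have e2 : eps <= r / 2 by rewrite ge_min lexx orbT.
exists eps => // g' Lg' Pg'.
split => //; move=> [_ ae'].
set D := [set x | eps < `|g' x - h x|].
have mD : measurable D.
  apply: mset_lt; first exact: measurable_cst.
  apply: measurableT_comp => //; exact: measurable_funB.
have : (P B <= P D)%E.
  apply: (@ae_sub _ _ _ P _ _ _ mB mD ae') => x /= Bx le.
  have := hs_lip g' h x.
  have : s h x - s g' x <= `|s g' x - s h x|.
    by rewrite distrC; exact: ler_norm.
  rewrite /D /=; move: Bx; rewrite /B /= => Bx.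
  have hq : forall q : R, q < s h x - s g x -> eps <= q / 2 -> 0 < q ->
    s h x - s g' x <= `|s g' x - s h x| ->
    `|s g' x - s h x| <= `|g' x - h x| -> eps < `|g' x - h x| by move=> q; lra.
  exact: hq Bx e1 k0.
rewrite Hr => H; have H2 := le_lt_trans H Pg'; rewrite lte_fin in H2.
have hq : forall a b : R, a < b -> b <= a / 2 -> 0 < a -> False by move=> a b; lra.
exact: hq H2 e2 r0.
Qed.

Lemma key_exists : (exists g, G g) -> L0convexly_compact P G ->
  exists2 h, G h & forall g, G g -> {ae P, forall x, s h x <= s g x}.
Proof.
move=> [g0 Gg0] cpt.
pose Fam := [set F | exists2 g, G g & F = G `&` Cg g].
have [h Hh] : exists f, forall F, Fam F -> F f.
  apply: cpt.
  - move=> F [g Gg ->]; have Lg := GL0.1 _ Gg; split.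
    + split; first by move=> f [Gf _]; exact: GL0.1.
      move=> f f' [Gf [Lf af]] Lf' e; split; first exact: GL0.2 f f' Gf Lf' e.
      split => //; apply: filterS2 e af => x e1 le.
      by rewrite -(s_loc _ _ _ e1).
    + by move=> f [].
    + move=> f1 f2 xi [G1 [L1 a1]] [G2 [L2 a2]] Lxi axi; split; first exact: Gcvx.
      split.
        apply: measurable_funD; apply: measurable_funM => //.
        apply: measurable_funB => //; exact: measurable_cst.
      apply: filterS3 axi a1 a2 => x b l1 l2.
      by apply: le_trans (hs_conv _ _ _ _ b) _; rewrite ge_max l1 l2.
    + exists (Cg g) => //; exact: Cg_closed.
  - move=> n hF HF.
    have : forall i, exists g, G g /\ hF i = G `&` Cg g.
      by move=> i; case: (HF i) => g ? ?; exists g.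
    move=> /choice [gI HgI].
    case: n hF HF gI HgI => [|n] hF HF gI HgI.
      by exists g0 => -[].
    have [m [Gm Hm]] := fip_nat (fun k => gI (inord k)) n.+1 (ex_intro _ g0 Gg0)
                          (fun k _ => (HgI (inord k)).1).
    exists m => i; rewrite (HgI i).2; split => //; split; first exact: GL0.1.
    by apply: aeW => x; have := Hm i (ltn_ord i) x; rewrite inord_val.
exists h.
  by have := Hh (G `&` Cg g0) (ex_intro2 _ _ g0 Gg0 erefl); case.
move=> g Gg.
by have [_ [_ ]] := Hh (G `&` Cg g) (ex_intro2 _ _ g Gg erefl).
Qed.

End Key.

Section Conv.
Variable R : realType.

Lemma conv_le (a b xi : R) : 0 <= xi <= 1 ->
  xi * a + (1 - xi) * b <= Num.max a b.
Proof.
move=> /andP [b0 b1].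
have m1 : a <= Num.max a b by rewrite le_max lexx.
have m2 : b <= Num.max a b by rewrite le_max lexx orbT.
move: (Num.max a b) m1 m2 => M m1 m2; nra.
Qed.

Lemma conv_neg (a b xi : R) : 0 <= xi <= 1 ->
  - (xi * a + (1 - xi) * b) <= Num.max (- a) (- b).
Proof.
move=> hb.
have -> : - (xi * a + (1 - xi) * b) = xi * (- a) + (1 - xi) * (- b) by ring.
exact: conv_le.
Qed.

Lemma conv_abs (a b c xi : R) : 0 <= xi <= 1 ->
  `|xi * a + (1 - xi) * b - c| <= Num.max `|a - c| `|b - c|.
Proof.
move=> hb; have /andP [b0 b1] := hb.
apply: (le_trans _ (conv_le _ _ _ hb)).
have -> : xi * a + (1 - xi) * b - c = xi * (a - c) + (1 - xi) * (b - c) by ring.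
apply: le_trans (ler_normD _ _) _.
rewrite !normrM (ger0_norm b0) (ger0_norm (_ : 0 <= 1 - xi)) //; lra.
Qed.

End Conv.

Theorem proposition3p2 (d : measure_display) (T : measurableType d)
  (R : realType) (P : probability T R) (G : set (T -> R)) :
  L0set P G -> (exists g, G g) -> L0convex P G ->
  L0convexly_compact P G ->
  (exists2 xi : T -> R, L0 xi /\ {ae P, forall x, 0 <= xi x} &
     forall g, G g -> {ae P, forall x, `|g x| <= xi x})
  /\ prob_closed P G.
Proof.
move=> GL0 Gne Gcvx cpt; split.
-
  have [hmin Gmin Hmin] := @key_exists d T R P (fun h => h)
    (fun h Lh => Lh)
    (fun h1 h2 xi x b => @conv_le R (h1 x) (h2 x) (xi x) b)
    (fun h1 h2 x => lexx _) G GL0 Gcvx Gne cpt.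
  have [hmax Gmax Hmax] := @key_exists d T R P (fun h x => - h x)
    (fun h Lh => measurable_funN Lh)
    (fun h1 h2 xi x b => @conv_neg R (h1 x) (h2 x) (xi x) b)
    (fun h1 h2 x => ltac:(rewrite -opprD normrN; exact: lexx)) G GL0 Gcvx Gne cpt.
  exists (fun x => `|hmin x| + `|hmax x|).
    split; last by apply: aeW => x; rewrite addr_ge0.
    apply: measurable_funD; apply: measurableT_comp => //; exact: GL0.1.
  move=> g Gg; apply: filterS2 (Hmin g Gg) (Hmax g Gg) => x l1 l2 /=.
  have n1 := ler_norm (hmax x); have n2 := ler_norm (- hmin x).
  rewrite normrN in n2.
  have p1 := normr_ge0 (hmin x); have p2 := normr_ge0 (hmax x).
  rewrite ler_norml; apply/andP; split; lra.
- split; first exact: GL0.1.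
  split; first by move=> f [].
  move=> f [Lf nGf].
  case: (pselect (exists2 eps : R, 0 < eps & forall g, L0 g ->
     (P [set x | (eps < `|g x - f x|)%R] < eps%:E)%E -> (L0 `\` G) g)) => // Hn.
  exfalso.
  have Hg : forall eps : R, 0 < eps ->
      exists g, G g /\ (P [set x | (eps < `|g x - f x|)%R] < eps%:E)%E.
    move=> eps e0; apply: contrapT => nex; apply: Hn; exists eps => // g Lg Pg.
    by split => // Gg; apply: nex; exists g; split.
  have meas : forall h, L0 h -> L0 (fun x => `|h x - f x|).
    by move=> h Lh; apply: measurableT_comp => //; exact: measurable_funB.
  have lip : forall (h1 h2 : T -> R) x,
      `| `|h1 x - f x| - `|h2 x - f x| | <= `|h1 x - h2 x|.
    move=> h1 h2 x; have := ler_dist_dist (h1 x - f x) (h2 x - f x).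
    have -> : h1 x - f x - (h2 x - f x) = h1 x - h2 x by ring.
    done.
  have [hf Gf Hf] := @key_exists d T R P (fun h x => `|h x - f x|) meas
    (fun h1 h2 xi x b => @conv_abs R (h1 x) (h2 x) (f x) (xi x) b)
    lip G GL0 Gcvx Gne cpt.
  have Lhf : L0 hf by exact: GL0.1.
  have aeq : {ae P, forall x, `|hf x - f x| <= 0}.
    apply: (@ae_levels _ _ _ P); first exact: meas.
    move=> k.
    have k0 : 0 < k.+1%:R^-1 :> R by rewrite invr_gt0 ltr0n.
    have mE : measurable [set x | k.+1%:R^-1 < `|hf x - f x|].
      by apply: mset_lt; [exact: measurable_cst | exact: meas].
    apply: (@le_eps_0 _ _ _ P _ (k.+1%:R^-1) mE k0) => eps e0 ek.
    have [g [Gg Pg]] := Hg eps e0.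
    have Lg : L0 g by exact: GL0.1.
    have mD : measurable [set x | eps < `|g x - f x|].
      by apply: mset_lt; [exact: measurable_cst | exact: meas].
    apply: le_trans (ltW Pg).
    apply: (@ae_sub _ _ _ P _ _ _ mE mD (Hf g Gg)) => x /= Ex le.
    have hq : forall q : R, q < `|hf x - f x| -> eps <= q ->
      `|hf x - f x| <= `|g x - f x| -> eps < `|g x - f x| by move=> q; lra.
    exact: hq Ex ek le.
  apply: nGf; apply: (GL0.2 hf f Gf Lf).
  by apply: filterS aeq => x; rewrite normr_le0 subr_eq0 => /eqP.
Qed.
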